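(* Let $\tau$ be a finite relational vocabulary and $k\in\mathbb N$. For every monadic $k$-interpretation scheme $\mathbf c$ for $\tau$ there exists a monadic $(k+2)$-interpretation scheme $\mathbf c'$ for $\tau$ such that: $k_1^{\mathbf c'}=0$; $k_2^{\mathbf c'}=k_2^{\mathbf c}+2$; and for every $k_2^{\mathbf c}$-tree $\mathfrak T$ there exists a $k_2^{\mathbf c'}$-tree $\mathfrak T'$ with $\mathfrak T^{[\mathbf c]}\cong\mathfrak T'^{[\mathbf c']}$. Consequently $\mathfrak K^{mo}_{\mathbf c}\subseteq\mathfrak K^{mo}_{\mathbf c'}$.
   Context: Trees: $\tau_{trees}=\{\le,c_{rt}\}$ ($c_{rt}$ a constant). A tree is a $\tau_{trees}$-structure $\mathfrak T$ such that for every $t$ the set $\{s:s\le^{\mathfrak T}t\}$ is linearly ordered by $\le^{\mathfrak T}$, and $c_{rt}^{\mathfrak T}\le^{\mathfrak T}x$ for all $x$. The vocabulary of $k$-trees is $\tau_{k\text{-trees}}=\{\le,c_{rt},P_1,\dots,P_k\}$ with $P_i$ unary; a $k$-tree is a $\tau_{k\text{-trees}}$-structure whose $\tau_{trees}$-reduct is a tree. Monadic interpretation schemes: a monadic $k$-interpretation scheme $\mathbf c$ for $\tau$ consists of natural numbers $k_1^{\mathbf c},k_2^{\mathbf c}\le k$; for each $l\le k_1^{\mathbf c}$ a monadic second-order $\tau_{k_2^{\mathbf c}\text{-trees}}$-formula $\varphi^{\mathbf c}_{=,l}(x)$; and for every $n$-place $R\in\tau$ and every $\eta:\{1,\dots,n\}\to\{0,\dots,k_1^{\mathbf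 c}\}$ a monadic second-order $\tau_{k_2^{\mathbf c}\text{-trees}}$-formula $\varphi^{\mathbf c}_{R,\eta}(x_1,\dots,x_n)$. For a $k_2^{\mathbf c}$-tree $\mathfrak T$, the interpretation $\mathfrak T^{[\mathbf c]}$ is the $\tau$-structure $M$ with $|M|=\{(t,l)\in|\mathfrak T|\times\{0,\dots,k_1^{\mathbf c}\}:\mathfrak T\models\varphi_{=,l}(t)\}$ and, for $n$-place $R$, $R^M=\{((t_i,l_i))_{i\le n}\in|M|^n:\mathfrak T\models\varphi_{R,(l_i)_{i\le n}}(t_1,\dots,t_n)\}$. $\mathfrak K^{mo}_{\mathbf c}$ is the class of $\tau$-structures isomorphic to $\mathfrak T^{[\mathbf c]}$ for some $k_2^{\mathbf c}$-tree $\mathfrak T$. *)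

(* Defs.v *)
From mathcomp Require Import all_boot.
Set Implicit Arguments.
Unset Strict Implicit.
Unset Printing Implicit Defensive.

(* A finite relational vocabulary tau: a finite type of relation symbols,
   each with an arity.  Tuples of length n are functions 'I_n -> M. *)

Record structure (Sym : finType) (ar : Sym -> nat) := Structure {
  carrier :> Type;
  rel : forall s : Sym, ('I_(ar s) -> carrier) -> Prop
}.

Definition isomorphic (Sym : finType) (ar : Sym -> nat)
    (M N : structure ar) : Prop :=
  exists (f : M -> N) (g : N -> M),
    cancel f g /\ cancel g f /\
    forall (s : Sym) (a : 'I_(ar s) -> M), rel a <-> rel (f \o a).

Record ktree (k : nat) := KTree {
  node :> Type;
  tle : node -> node -> Prop;
  troot : node;
  tP : 'I_k -> node -> Prop;
  tle_refl : forall x, tle x x;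
  tle_antisym : forall x y, tle x y -> tle y x -> x = y;
  tle_trans : forall x y z, tle x y -> tle y z -> tle x z;
  tle_lin : forall t x y, tle x t -> tle y t -> tle x y \/ tle y x;
  troot_min : forall x, tle troot x
}.

Inductive term := TVar of nat | TRoot.

Inductive mso (k : nat) : Type :=
| FLe  : term -> term -> mso k
| FEq  : term -> term -> mso k
| FP   : 'I_k -> term -> mso k
| FIn  : term -> nat -> mso k
| FNot : mso k -> mso k
| FAnd : mso k -> mso k -> mso k
| FEx1 : nat -> mso k -> mso k
| FEx2 : nat -> mso k -> mso k.

Section Semantics.
Variables (k : nat) (T : ktree k).

Definition eval_term (e1 : nat -> T) (t : term) : T :=
  match t with TVar x => e1 x | TRoot => troot T end.

Definition upd {A : Type} (e : nat -> A) (j : nat) (a : A) : nat -> A :=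
  fun i => if i == j then a else e i.

Fixpoint sat (e1 : nat -> T) (e2 : nat -> T -> Prop) (f : mso k) : Prop :=
  match f with
  | FLe t1 t2 => tle (eval_term e1 t1) (eval_term e1 t2)
  | FEq t1 t2 => eval_term e1 t1 = eval_term e1 t2
  | FP i t => tP i (eval_term e1 t)
  | FIn t X => e2 X (eval_term e1 t)
  | FNot g => ~ sat e1 e2 g
  | FAnd g h => sat e1 e2 g /\ sat e1 e2 h
  | FEx1 x g => exists a : T, sat (upd e1 x a) e2 g
  | FEx2 X g => exists A : T -> Prop, sat e1 (upd e2 X A) g
  end.

(* environment for a formula phi(x_1,...,x_n): variable i-1 |-> t_i *)
Definition tuple_env (n : nat) (t : 'I_n -> T) : nat -> T :=
  fun j => match (insub j : option 'I_n) with Some i => t i | None => troot T end.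

Definition holds (n : nat) (f : mso k) (t : 'I_n -> T) : Prop :=
  sat (tuple_env t) (fun _ _ => False) f.
End Semantics.

Definition term_wf (V : nat -> Prop) (t : term) : Prop :=
  match t with TVar x => V x | TRoot => True end.

Fixpoint mso_wf (k : nat) (V W : nat -> Prop) (f : mso k) : Prop :=
  match f with
  | FLe t1 t2 | FEq t1 t2 => term_wf V t1 /\ term_wf V t2
  | FP _ t => term_wf V t
  | FIn t X => term_wf V t /\ W X
  | FNot g => mso_wf V W g
  | FAnd g h => mso_wf V W g /\ mso_wf V W h
  | FEx1 x g => mso_wf (fun y => y = x \/ V y) W g
  | FEx2 X g => mso_wf V (fun Y => Y = X \/ W Y) g
  end.

(* an MSO formula phi(x_1,...,x_n): free variables among x_1..x_n
   (encoded as variables 0..n-1), no free set variables *)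
Arguments mso_wf {k}.
Definition formula_in (k n : nat) (f : mso k) : Prop :=
  mso_wf (fun y => y < n) (fun _ => False) f.

(* indices l in {0,...,k1} are elements of 'I_k1.+1 *)
Record scheme (Sym : finType) (ar : Sym -> nat) (k : nat) := Scheme {
  k1 : nat;
  k2 : nat;
  k1_le : k1 <= k;
  k2_le : k2 <= k;
  phi_eq : 'I_k1.+1 -> mso k2;
  phi_rel : forall s : Sym, ('I_(ar s) -> 'I_k1.+1) -> mso k2;
  phi_eq_wf : forall l, @formula_in k2 1 (phi_eq l);
  phi_rel_wf : forall s eta, @formula_in k2 (ar s) (@phi_rel s eta)
}.
Arguments phi_eq {Sym ar k} c l : rename.
Arguments phi_rel {Sym ar k} c s eta : rename.

Section Interp.
Variables (Sym : finType) (ar : Sym -> nat) (k : nat) (c : scheme ar k).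
Variable T : ktree (k2 c).

Definition interp_dom : Type :=
  { p : T * 'I_(k1 c).+1 | holds (phi_eq c p.2) (fun _ : 'I_1 => p.1) }.

Definition interp_rel (s : Sym) (a : 'I_(ar s) -> interp_dom) : Prop :=
  holds (phi_rel c s (fun i => (sval (a i)).2)) (fun i => (sval (a i)).1).

Definition interp : structure ar := @Structure Sym ar interp_dom interp_rel.
End Interp.
Arguments interp {Sym ar k} c T.

Definition Kmo (Sym : finType) (ar : Sym -> nat) (k : nat) (c : scheme ar k)
    (M : structure ar) : Prop :=
  exists T : ktree (k2 c), isomorphic M (interp c T).

(* Main.v *)
Require Import Defs.
From mathcomp Require Import all_boot.
From mathcomp Require Import zify.
From Stdlib Require Import Lia Classical FunctionalExtensionality ProofIrrelevance.
Set Implicit Arguments.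
Unset Strict Implicit.
Unset Printing Implicit Defensive.

Section Tree.
Variables (k2 k1 : nat) (T : ktree k2).

Definition N' := (node T + (node T * 'I_k1.+1))%type.
Definition anc (x : N') : T := match x with inl a => a | inr (a, _) => a end.
Definition isnew (x : N') : Prop := match x with inl _ => False | inr _ => True end.
Definition le' (x y : N') : Prop :=
  match x with
  | inl a => tle a (anc y)
  | inr (a, l) => match y with inl _ => False | inr (b, m) => a = b /\ (l <= m)%N end
  end.

Lemma le'_anc x y : le' x y -> tle (anc x) (anc y).
Proof.
case: x => [a|[a l]] /=; first done.
case: y => [b|[b m]] //= [-> _]; exact: tle_refl.
Qed.

Lemma le'_refl x : le' x x.
Proof. case: x => [a|[a l]] /=; [exact: tle_refl | by split]. Qed.

Lemma le'_antisym x y : le' x y -> le' y x -> x = y.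
Proof.
case: x => [a|[a l]]; case: y => [b|[b m]] //=.
- by move=> h1 h2; rewrite (tle_antisym h1 h2).
- by move=> [-> h1] [_ h2]; congr (inr (_, _)); apply: val_inj; apply/eqP; rewrite eqn_leq h1 h2.
Qed.

Lemma le'_trans x y z : le' x y -> le' y z -> le' x z.
Proof.
case: x => [a|[a l]] /=.
  by move=> h1 h2; apply: tle_trans h1 (le'_anc h2).
case: y => [b|[b m]] //=; case: z => [c|[c n]] //= [-> h1] [-> h2]; split=> //.
exact: leq_trans h1 h2.
Qed.

Lemma le'_lin t x y : le' x t -> le' y t -> le' x y \/ le' y x.
Proof.
case: x => [a|[a l]]; case: y => [b|[b m]] /=.
- exact: tle_lin.
- by case: t => [c|[c n]] //= h [-> _]; left.
- by case: t => [c|[c n]] //= [-> _] h; right.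
- case: t => [c|[c n]] //= [-> _] [-> _].
  by case: (leqP l m) => h; [left | right; split=> //; apply: ltnW].
Qed.

Lemma le'_root x : le' (inl (troot T)) x.
Proof. exact: troot_min. Qed.

Lemma lt_k2 : (k2 < k2 + 2)%N. Proof. by rewrite addn2 leqW. Qed.
Definition newlab : 'I_(k2 + 2) := Ordinal lt_k2.

Definition tP' (i : 'I_(k2 + 2)) (x : N') : Prop :=
  (exists H : (i < k2)%N, tP (Ordinal H) (anc x)) \/ (val i = k2 /\ isnew x).

Definition Tp : ktree (k2 + 2) :=
  @KTree (k2 + 2) N' le' (inl (troot T)) tP' le'_refl le'_antisym le'_trans le'_lin le'_root.

Lemma tP'_widen i x : tP' (widen_ord (leq_addr 2 k2) i) x <-> tP i (anc x).
Proof.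
split.
- case=> [[H h]|[h _]].
    by have <- : Ordinal H = i by apply: val_inj.
  by move: h (ltn_ord i) => /= ->; rewrite ltnn.
- move=> h; left; exists (ltn_ord i).
  by have -> : Ordinal (ltn_ord i) = i by apply: val_inj.
Qed.

Lemma tP'_new x : tP' newlab x <-> isnew x.
Proof.
split; last by move=> h; right.
by case=> [[H _]|[_ h]] //; move: H; rewrite /= ltnn.
Qed.
End Tree.


Arguments FLe {k} _ _.
Arguments FEq {k} _ _.
Arguments FIn {k} _ _.
Definition Ftrue {k} : mso k := FEq TRoot TRoot.
Definition Ffalse {k} : mso k := FNot Ftrue.
Definition For {k} (f g : mso k) := FNot (FAnd (FNot f) (FNot g)).
Definition Fimp {k} (f g : mso k) := FNot (FAnd f (FNot g)).
Definition Fall {k} x (f : mso k) := FNot (FEx1 x (FNot f)).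

Section Gen.
Variables (k : nat) (T : ktree k).
Lemma sat_For e1 e2 f g : sat e1 e2 (For f g) <-> sat (T:=T) e1 e2 f \/ sat e1 e2 g.
Proof. simpl; split; [apply: NNPP; tauto | tauto]. Qed.
Lemma sat_Fimp e1 e2 f g : sat e1 e2 (Fimp f g) <-> (sat (T:=T) e1 e2 f -> sat e1 e2 g).
Proof. simpl; split; [move=> h hf; apply: NNPP; tauto | tauto]. Qed.
Lemma sat_Fall e1 e2 x f : sat e1 e2 (Fall x f) <-> forall a : T, sat (upd e1 x a) e2 f.
Proof.
simpl; split.
- by move=> h a; apply: NNPP => hn; apply: h; exists a.
- by move=> h [a ha]; apply: ha.
Qed.
Lemma upd_eq (A : Type) (e : nat -> A) j a : upd e j a j = a.
Proof. by rewrite /upd eqxx. Qed.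
Lemma upd_neq (A : Type) (e : nat -> A) j a i : i != j -> upd e j a i = e i.
Proof. by rewrite /upd => /negbTE ->. Qed.
End Gen.

Definition tn (t : term) := match t with TVar x => x | TRoot => 0 end.

Lemma eval_upd k (T : ktree k) e j a t : (tn t < j)%N ->
  eval_term (upd e j a) t = eval_term (T:=T) e t.
Proof. by case: t => [x|] //= h; rewrite upd_neq // neq_ltn h. Qed.

Section Forms.
Variable k2 : nat.
Definition newF v : mso (k2 + 2) := FP (newlab k2) (TVar v).
Definition origF v : mso (k2 + 2) := FNot (newF v).
Definition Anch a t : mso (k2 + 2) :=
  FAnd (origF a) (FAnd (FLe (TVar a) t)
    (Fall (a + tn t).+1 (Fimp (FAnd (origF (a + tn t).+1) (FLe (TVar (a + tn t).+1) t))
                               (FLe (TVar (a + tn t).+1) (TVar a))))).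
Definition strictF w v : mso (k2 + 2) := FAnd (FLe (TVar w) (TVar v)) (FNot (FEq (TVar w) (TVar v))).

Fixpoint Ef (l v : nat) : mso (k2 + 2) :=
  match l with
  | 0 => Fall v.+1 (Fimp (strictF v.+1 v) (origF v.+1))
  | l'.+1 => FEx1 v.+1 (FAnd (strictF v.+1 v) (FAnd (FAnd (newF v.+1) (Ef l' v.+1))
               (Fall v.+2 (Fimp (FAnd (strictF v.+2 v) (newF v.+2)) (FLe (TVar v.+2) (TVar v.+1))))))
  end.
Definition Df l v := FAnd (newF v) (Ef l v).

Fixpoint tr (f : mso k2) : mso (k2 + 2) :=
  match f with
  | FLe t1 t2 => let a := (tn t1 + tn t2).+1 in
      FEx1 a (FEx1 a.+1 (FAnd (Anch a t1) (FAnd (Anch a.+1 t2) (FLe (TVar a) (TVar a.+1)))))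
  | FEq t1 t2 => let a := (tn t1 + tn t2).+1 in
      FEx1 a (FEx1 a.+1 (FAnd (Anch a t1) (FAnd (Anch a.+1 t2) (FEq (TVar a) (TVar a.+1)))))
  | FP i t => FP (widen_ord (leq_addr 2 k2) i) t
  | FIn t X => let a := (tn t).+1 in FEx1 a (FAnd (Anch a t) (FIn (TVar a) X))
  | FNot g => FNot (tr g)
  | FAnd g h => FAnd (tr g) (tr h)
  | FEx1 x g => FEx1 x (tr g)
  | FEx2 X g => FEx2 X (tr g)
  end.

Variables (k1 : nat) (T : ktree k2).
Notation TT := (Tp k1 T).

Lemma sat_newF e e2 v : sat (T:=TT) e e2 (newF v) <-> isnew (e v).
Proof. exact: tP'_new. Qed.

Lemma sat_Anch e e2 a t : sat (T:=TT) e e2 (Anch a t) <-> e a = inl (anc (eval_term e t)).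
Proof.
rewrite /Anch; cbn -[Fall Fimp newF]; rewrite sat_Fall sat_newF.
set b := (a + tn t).+1.
have eb : forall y, eval_term (upd e b y) t = eval_term e t.
  by move=> y; apply: eval_upd; rewrite /b ltnS leq_addl.
have ab : a != b by rewrite /b neq_ltn ltnS leq_addr.
split.
- case=> hn [hle hall].
  case E: (e a) => [z|p]; last by case: hn; rewrite E.
  rewrite E /= in hle.
  move: (hall (inl (anc (eval_term e t)))).
  rewrite sat_Fimp; cbn -[newF]; rewrite sat_newF upd_eq eb (upd_neq _ _ ab) E /= => h.
  have h' : tle (anc (eval_term e t)) z.
    apply: h; split=> //; case: (eval_term e t) => [w|[w m]] /=; exact: tle_refl.
  by rewrite (tle_antisym hle h').
- move=> Ea; rewrite Ea; split=> //; split.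
    by case: (eval_term e t) => [w|[w m]] /=; exact: tle_refl.
  move=> y; rewrite sat_Fimp; cbn -[newF]; rewrite sat_newF upd_eq eb (upd_neq _ _ ab) Ea.
  by case: y => [w|[w m]] /= [hn h] //; case: hn.
Qed.
End Forms.


Section Idx.
Variables (k2 k1 : nat) (T : ktree k2).
Notation TT := (Tp k1 T).
Definition isidx l (x : N' k1 T) : Prop :=
  match x with inl _ => False | inr (_, i) => val i = l end.

Lemma E0_sem (x : N' k1 T) : isnew x ->
  (forall w, le' w x /\ w <> x -> ~ isnew w) <-> isidx 0 x.
Proof.
case: x => [//|[a i]] _ /=; split.
- move=> h; apply: NNPP => hi; apply: (h (inr (a, ord0))) => //; split; first by split.
  by move=> [] /(congr1 val) /= hi'; apply: hi.
- move=> hi [b|[b j]] /=; first by move=> _ []. move=> [[Eb hj] hne] _; subst b; apply: hne; congr (inr (_, _)); apply: val_inj => /=; move: hj; rewrite hi leqn0 => /eqP -> //.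
Qed.

Lemma ES_sem l (x : N' k1 T) : isnew x ->
  (exists u, (le' u x /\ u <> x) /\ isidx l u /\
     forall w, (le' w x /\ w <> x) /\ isnew w -> le' w u) <-> isidx l.+1 x.
Proof.
case: x => [//|[a i]] _ /=; split.
- case=> [[b|[b j]]] [[hle hne] [hu hall]] //=.
  case: hle => Eb hji; subst b.
  have hji' : j != i :> nat.
    apply/eqP => h; apply: hne; by congr (inr (_, _)); apply: val_inj.
  apply: NNPP => hne'.
  have hl : (l.+1 < k1.+1)%N by move: (ltn_ord i) hji hji' hu hne'; rewrite /=; lia.
  have hw := hall (inr (a, Ordinal hl)).
  have [_ hw'] : le' (inr (a, Ordinal hl)) (inr (a, j)).
    apply: hw; split=> //; split.
      by split=> //=; move: hu hji hji' hne'; rewrite /=; lia.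
    by move=> [] /(congr1 val) /= h; apply: hne'; rewrite -h.
  by move: hw' hu; rewrite /=; lia.
- move=> hi.
  have hl : (l < k1.+1)%N by move: (ltn_ord i); lia.
  exists (inr (a, Ordinal hl)); split; [split|split] => //=.
  + by split=> //; lia.
  + by move=> [] /(congr1 val) /= h; lia.
    move=> [b|[b j]] /= [[hle hne] hn]; first by case: hn.
    case: hle => Eb hj; subst b; split=> //.
    have : j != i :> nat by apply/eqP => h; apply: hne; congr (inr (_, _)); apply: val_inj.
    move: hj hi; rewrite /=; lia.
Qed.
End Idx.

Lemma neqS n : n != n.+1. Proof. by rewrite neq_ltn ltnSn. Qed.
Lemma neqSS n : n != n.+2. Proof. by rewrite neq_ltn ltnW. Qed.

Section DfSem.
Variables (k2 k1 : nat) (T : ktree k2).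
Notation TT := (Tp k1 T).

Lemma isidx_new l (x : N' k1 T) : isidx l x -> isnew x.
Proof. by case: x => [|[]]. Qed.

Lemma sat_strictF e e2 w v : sat (T:=TT) e e2 (strictF k2 w v) <-> (le' (e w) (e v) /\ e w <> e v).
Proof. by []. Qed.

Lemma sat_Df l : forall v e e2, sat (T:=TT) e e2 (Df k2 l v) <-> isidx l (e v).
Proof.
elim: l => [|l IH] v e e2.
- have H0 : forall w, sat (upd e v.+1 w) e2 (Fimp (strictF k2 v.+1 v) (origF k2 v.+1)) <->
     (le' w (e v) /\ w <> e v -> ~ isnew w).
    move=> w; rewrite sat_Fimp sat_strictF; cbn -[newF]; rewrite sat_newF upd_eq upd_neq //.
    exact: neqS.
  rewrite /Df; cbn -[newF Fall]; rewrite sat_newF sat_Fall; split.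
  + by case=> hn h; apply/E0_sem => // w; apply/H0/h.
  + move=> hi; have hn := isidx_new hi; split=> // w; apply/H0; move: w; exact/E0_sem.
- have H1 : forall u, sat (upd e v.+1 u) e2 (FAnd (strictF k2 v.+1 v) (FAnd (Df k2 l v.+1)
        (Fall v.+2 (Fimp (FAnd (strictF k2 v.+2 v) (newF k2 v.+2)) (FLe (TVar v.+2) (TVar v.+1))))))
      <-> ((le' u (e v) /\ u <> e v) /\ isidx l u /\
           forall w, (le' w (e v) /\ w <> e v) /\ isnew w -> le' w u).
    move=> u; cbn -[Df Fall strictF]; rewrite sat_strictF sat_Fall IH upd_eq upd_neq; last exact: neqS.
    have H2 : forall w, sat (upd (upd e v.+1 u) v.+2 w) e2
        (Fimp (FAnd (strictF k2 v.+2 v) (newF k2 v.+2)) (FLe (TVar v.+2) (TVar v.+1))) <->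
        ((le' w (e v) /\ w <> e v) /\ isnew w -> le' w u).
      move=> w; rewrite sat_Fimp; cbn -[newF strictF]; rewrite sat_strictF sat_newF.
      rewrite !upd_eq (upd_neq _ _ (neqS _)) !(upd_neq _ _ (neqSS _)) upd_neq ?upd_eq //; exact: neqS.
    split.
    + case=> h1 [h2 h3]; split=> //; split=> // w; apply/H2/h3.
    + case=> h1 [h2 h3]; split=> //; split=> // w; apply/H2/h3.
  rewrite /Df; cbn -[newF Df Fall strictF]; rewrite sat_newF; split.
  + case=> hn [u /H1 hu]; apply/ES_sem => //; exists u; exact: hu.
  + move=> hi; have hn := isidx_new hi; split=> //.
    have [u hu] := (ES_sem l hn).2 hi; exists u; exact/H1.
Qed.
End DfSem.


Section TrSem.
Variables (k2 k1 : nat) (T : ktree k2).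
Notation TT := (Tp k1 T).

Lemma eval_anc (e : nat -> TT) t :
  eval_term (T:=T) (fun i => anc (e i)) t = anc (eval_term (T:=TT) e t).
Proof. by case: t. Qed.

Lemma anc_upd (e : nat -> TT) x a :
  (fun i => anc (upd e x a i)) = upd (fun i => anc (e i)) x (anc a).
Proof. by apply: functional_extensionality => i; rewrite /upd; case: (i == x). Qed.

Lemma set_upd (e2 : nat -> TT -> Prop) X A :
  (fun Y (t : T) => upd e2 X A Y (inl t)) = upd (fun Y t => e2 Y (inl t)) X (fun t => A (inl t)).
Proof. by apply: functional_extensionality => Y; rewrite /upd; case: (Y == X). Qed.

Lemma anch2 (e : nat -> TT) e2 t1 t2 y z :
  let a := (tn t1 + tn t2).+1 in
  let e' := upd (upd e a y) a.+1 z in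
  (sat e' e2 (Anch k2 a t1) /\ sat e' e2 (Anch k2 a.+1 t2)) <->
  (y = inl (anc (eval_term e t1)) /\ z = inl (anc (eval_term e t2))).
Proof.
move=> a e'; rewrite !sat_Anch /e' upd_eq (upd_neq _ _ (neqS _)) upd_eq.
by rewrite !eval_upd // /a; lia.
Qed.

Lemma ee (e : nat -> TT) a y z : upd (upd e a y) a.+1 z a = y /\ upd (upd e a y) a.+1 z a.+1 = z.
Proof. by rewrite upd_eq (upd_neq _ _ (neqS _)) upd_eq. Qed.

Lemma sat_trLe (e : nat -> TT) e2 t1 t2 : sat e e2 (tr (FLe t1 t2)) <->
   tle (anc (eval_term e t1)) (anc (eval_term e t2)).
Proof.
rewrite [tr _]/=; split.
- case=> y [z [h1 [h2 h3]]].
  have [E1 E2] := (anch2 e e2 t1 t2 y z).1 (conj h1 h2).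
  by move: h3 => /=; case: (ee e (tn t1 + tn t2).+1 y z) => -> ->; rewrite E1 E2.
- move=> h; exists (inl (anc (eval_term e t1))), (inl (anc (eval_term e t2))).
  have [h1 h2] := (anch2 e e2 t1 t2 (inl (anc (eval_term e t1))) (inl (anc (eval_term e t2)))).2 (conj erefl erefl).
  split=> //; split=> //=.
  by case: (ee e (tn t1 + tn t2).+1 (inl (anc (eval_term e t1))) (inl (anc (eval_term e t2)))) => -> ->.
Qed.

Lemma sat_trEq (e : nat -> TT) e2 t1 t2 : sat e e2 (tr (FEq t1 t2)) <->
   anc (eval_term e t1) = anc (eval_term e t2).
Proof.
rewrite [tr _]/=; split.
- case=> y [z [h1 [h2 h3]]].
  have [E1 E2] := (anch2 e e2 t1 t2 y z).1 (conj h1 h2).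
  by move: h3 => /=; case: (ee e (tn t1 + tn t2).+1 y z) => -> ->; rewrite E1 E2 => [[]].
- move=> h; exists (inl (anc (eval_term e t1))), (inl (anc (eval_term e t2))).
  have [h1 h2] := (anch2 e e2 t1 t2 (inl (anc (eval_term e t1))) (inl (anc (eval_term e t2)))).2 (conj erefl erefl).
  split=> //; split=> //=.
  by case: (ee e (tn t1 + tn t2).+1 (inl (anc (eval_term e t1))) (inl (anc (eval_term e t2)))) => -> ->; rewrite h.
Qed.

Lemma sat_trIn (e : nat -> TT) e2 t X : sat e e2 (tr (FIn t X)) <-> e2 X (inl (anc (eval_term e t))).
Proof.
rewrite [tr _]/=; split.
- case=> y [/sat_Anch h1 h2]; move: h2 => /=; rewrite upd_eq; move: h1; rewrite upd_eq eval_upd //.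
  by move=> ->.
- move=> h; exists (inl (anc (eval_term e t))); split.
    by apply/sat_Anch; rewrite upd_eq eval_upd.
  by rewrite /= upd_eq.
Qed.

Lemma tr_sat (f : mso k2) : forall (e : nat -> TT) e2,
  sat e e2 (tr f) <-> sat (T:=T) (fun i => anc (e i)) (fun X t => e2 X (inl t)) f.
Proof.
elim: f => [t1 t2|t1 t2|i t|t X|g IH|g IHg h IHh|x g IH|X g IH] e e2.
- by rewrite sat_trLe /= !eval_anc.
- by rewrite sat_trEq /= !eval_anc.
- by rewrite /= tP'_widen eval_anc.
- by rewrite sat_trIn /= eval_anc.
- by rewrite /= IH.
- by rewrite /= IHg IHh.
- split; rewrite /=.
  + by case=> a /IH; rewrite anc_upd => h; exists (anc a).
  + by case=> a h; exists (inl a); apply/IH; rewrite anc_upd.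
- split; rewrite /=.
  + by case=> A /IH; rewrite set_upd => h; exists (fun t => A (inl t)).
  + by case=> A h; exists (fun x => A (anc x)); apply/IH; rewrite set_upd.
Qed.
End TrSem.


Definition bigOr {k} {A : Type} (s : seq A) (F : A -> mso k) : mso k :=
  foldr (fun a acc => For (F a) acc) Ffalse s.
Definition bigAnd {k} {A : Type} (s : seq A) (F : A -> mso k) : mso k :=
  foldr (fun a acc => FAnd (F a) acc) Ftrue s.

Section Big.
Variables (k : nat) (T : ktree k).
Lemma sat_bigOr (A : eqType) (s : seq A) F e e2 :
  sat (T:=T) e e2 (bigOr s F) <-> exists2 a, a \in s & sat e e2 (F a).
Proof.
elim: s => [|a s IH].
  by split=> [/= []|[a]] //.
change (sat e e2 (For (F a) (bigOr s F)) <-> exists2 b, b \in a :: s & sat e e2 (F b)); rewrite sat_For IH; split.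
- by case=> [h|[b hb h]]; [exists a; rewrite ?inE ?eqxx | exists b; rewrite ?inE ?hb ?orbT].
- case=> b; rewrite inE => /orP [/eqP ->|hb] h; [by left| by right; exists b].
Qed.
Lemma sat_bigAnd (A : eqType) (s : seq A) F e e2 :
  sat (T:=T) e e2 (bigAnd s F) <-> forall a, a \in s -> sat e e2 (F a).
Proof.
elim: s => [|a s IH] /=; first by split.
rewrite -/(bigAnd s F) IH; split.
- by case=> h1 h2 b; rewrite inE => /orP [/eqP ->|hb] //; apply: h2.
- by move=> h; split=> [|b hb]; apply: h; rewrite inE ?eqxx ?hb ?orbT.
Qed.
End Big.

Lemma term_wf_mono (V V' : nat -> Prop) t : (forall y, V y -> V' y) -> term_wf V t -> term_wf V' t.
Proof. by case: t => //= x h; apply: h. Qed.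

Lemma mso_wf_bigOr k (A : Type) (s : seq A) (F : A -> mso k) V W :
  (forall a, mso_wf V W (F a)) -> mso_wf V W (bigOr s F).
Proof. by move=> h; elim: s => [|a s IH] //=. Qed.
Lemma mso_wf_bigAnd k (A : eqType) (s : seq A) (F : A -> mso k) V W :
  (forall a, a \in s -> mso_wf V W (F a)) -> mso_wf V W (bigAnd s F).
Proof.
elim: s => [|a s IH] //= h; split; first by apply: h; rewrite inE eqxx.
by apply: IH => b hb; apply: h; rewrite inE hb orbT.
Qed.

Section Wf.
Variable k2 : nat.
Lemma wf_Anch V W a t : V a -> term_wf V t -> mso_wf V W (Anch k2 a t).
Proof.
move=> ha ht; rewrite /=.
repeat split; try (by left); try (by right). all: try exact ht. all: try (by apply: term_wf_mono ht => y; right). all: exact ha.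
Qed.

Lemma wf_Df l : forall v V W, V v -> mso_wf V W (Df k2 l v).
Proof.
elim: l => [|l IH] v V W hv /=.
  by repeat split; try (by left); try (by right; left); try (by right; right); try (by right).
repeat split; try (by left); try (by right; left); try (by right; right); try (by right).
  exact hv. by case: (IH v.+1 (fun y => y = v.+1 \/ V y) W (or_introl erefl)).
Qed.

Lemma wf_tr (f : mso k2) : forall V W, mso_wf V W f -> mso_wf V W (tr f).
Proof.
elim: f => [t1 t2|t1 t2|i t|t X|g IH|g IHg h IHh|x g IH|X g IH] V W; cbn -[Anch].
- move=> [h1 h2]; split; [|split].
  + apply: wf_Anch; first by right; left.
    by apply: term_wf_mono h1 => y hy; right; right.
  + apply: wf_Anch; first by left.
    by apply: term_wf_mono h2 => y hy; right; right.
  + by split; [right; left | left].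
- move=> [h1 h2]; split; [|split].
  + apply: wf_Anch; first by right; left.
    by apply: term_wf_mono h1 => y hy; right; right.
  + apply: wf_Anch; first by left.
    by apply: term_wf_mono h2 => y hy; right; right.
  + by split; [right; left | left].
- done.
- move=> [h1 h2]; split; last by split=> //; left.
  apply: wf_Anch; first by left.
  by apply: term_wf_mono h1 => y hy; right.
- exact: IH.
- by move=> [h1 h2]; split; [apply: IHg | apply: IHh].
- exact: IH.
- exact: IH.
Qed.
End Wf.


Lemma tuple_env_i k (T : ktree k) n (x : 'I_n -> T) (i : 'I_n) : tuple_env x i = x i.
Proof. by rewrite /tuple_env valK. Qed.

Lemma tuple_anc k2 k1 (T : ktree k2) n (x : 'I_n -> Tp k1 T) :
  (fun j => anc (tuple_env x j)) = tuple_env (T:=T) (fun i => anc (x i)).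
Proof. by apply: functional_extensionality => j; rewrite /tuple_env; case: insub. Qed.

Lemma holds_tr k2 k1 (T : ktree k2) n (f : mso k2) (x : 'I_n -> Tp k1 T) :
  holds (tr f) x <-> holds (T:=T) f (fun i => anc (x i)).
Proof. by rewrite /holds tr_sat tuple_anc. Qed.

Section Main.
Variables (Sym : finType) (ar : Sym -> nat) (k : nat) (c : scheme ar k).

Definition phi_eq' (_ : 'I_1) : mso (k2 c + 2) :=
  bigOr (enum 'I_(k1 c).+1) (fun l => FAnd (Df (k2 c) l 0) (tr (phi_eq c l))).
Definition phi_rel' (s : Sym) (_ : 'I_(ar s) -> 'I_1) : mso (k2 c + 2) :=
  bigOr (enum {ffun 'I_(ar s) -> 'I_(k1 c).+1})
    (fun eta => FAnd (bigAnd (enum 'I_(ar s)) (fun i => Df (k2 c) (eta i) i))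
                     (tr (phi_rel c s eta))).
Arguments phi_rel' : clear implicits.

Lemma phi_eq'_wf l : @formula_in (k2 c + 2) 1 (phi_eq' l).
Proof.
apply: mso_wf_bigOr => l'; split; first by apply: wf_Df.
apply: wf_tr; exact: phi_eq_wf.
Qed.

Lemma phi_rel'_wf s eta : @formula_in (k2 c + 2) (ar s) (phi_rel' s eta).
Proof.
apply: mso_wf_bigOr => e; split.
  by apply: mso_wf_bigAnd => i _; apply: wf_Df.
apply: wf_tr; exact: phi_rel_wf.
Qed.

Lemma k1_le' : (0 <= k + 2)%N. Proof. by []. Qed.
Lemma k2_le' : (k2 c + 2 <= k + 2)%N. Proof. by rewrite leq_add2r; exact: k2_le. Qed.

Definition c' : scheme ar (k + 2) :=
  @Scheme Sym ar (k + 2) 0 (k2 c + 2) k1_le' k2_le' phi_eq' phi_rel' phi_eq'_wf phi_rel'_wf.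

Variable T : ktree (k2 c).
Notation TT := (Tp (k1 c) T).

Lemma dom_iff (x : TT) : holds (phi_eq' ord0) (fun _ : 'I_1 => x) <->
  exists p : T * 'I_(k1 c).+1, x = inr p /\ holds (phi_eq c p.2) (fun _ : 'I_1 => p.1).
Proof.
rewrite /holds sat_bigOr; split.
- case=> l _ [/sat_Df hD /tr_sat]; rewrite tuple_anc => hT.
  move: hD; rewrite (tuple_env_i _ ord0).
  case: x hT => [//|[t l']] /= hT hl.
  have El : l' = l by apply: val_inj.
  by subst l'; exists (t, l).
- case=> [[t l] [-> h]]; exists l; first by rewrite mem_enum.
  split.
    by apply/sat_Df; rewrite (tuple_env_i _ ord0).
  by apply/tr_sat; rewrite tuple_anc.
Qed.

Lemma noinl (o : 'I_1) a : holds (T:=TT) (phi_eq' o) (fun _ : 'I_1 => inl a) -> False.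
Proof. by move/(dom_iff (inl a)) => [p [E _]]. Qed.

Lemma inr_ok (o : 'I_1) (p : T * 'I_(k1 c).+1) :
  holds (T:=TT) (phi_eq' o) (fun _ : 'I_1 => inr p) -> holds (phi_eq c p.2) (fun _ : 'I_1 => p.1).
Proof. by move/(dom_iff (inr p)) => [p' [[<-] h]]. Qed.

Definition fdom (d : interp_dom (c:=c) T) : interp_dom (c:=c') TT :=
  exist _ (inr (sval d), ord0)
    ((dom_iff (inr (sval d))).2 (ex_intro _ (sval d) (conj erefl (svalP d)))).

Definition gdom (d : interp_dom (c:=c') TT) : interp_dom (c:=c) T :=
  match d with exist (x, o) H =>
    match x as x0 return holds (T:=TT) (phi_eq' o) (fun _ : 'I_1 => x0) -> interp_dom (c:=c) T with
    | inl a => fun H => False_rect _ (noinl H)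
    | inr p => fun H => exist _ p (inr_ok H)
    end H
  end.

Lemma isidx_inr l (p : T * 'I_(k1 c).+1) : isidx l (inr p : TT) <-> val p.2 = l.
Proof. by case: p. Qed.

Lemma iso_main : isomorphic (interp c T) (interp c' TT).
Proof.
exists fdom, gdom; split; [|split].
- by case=> p H /=; f_equal; apply: proof_irrelevance.
- case=> [[x o] H]; case: x H => [a|p] H /=; first by exfalso; exact: noinl H.
  have Eo : o = ord0 := ord1 o; subst o.
  by rewrite /fdom /=; f_equal; apply: proof_irrelevance.
- move=> s a; rewrite /= /interp_rel /= /holds sat_bigOr; split.
  + move=> h; exists [ffun i => (sval (a i)).2]; first by rewrite mem_enum.
    split.
      apply/sat_bigAnd => i _; apply/sat_Df; rewrite tuple_env_i /=.
      by apply/isidx_inr; rewrite ffunE.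
    apply/tr_sat; rewrite tuple_anc.
    have -> : fun_of_fin [ffun i => (sval (a i)).2] = (fun i => (sval (a i)).2).
      by apply: functional_extensionality => i; rewrite ffunE.
    exact: h.
  + case=> eta _ [/sat_bigAnd h1 /tr_sat]; rewrite tuple_anc.
    have -> : fun_of_fin eta = (fun i => (sval (a i)).2).
      apply: functional_extensionality => i; apply: val_inj.
      have := h1 i (mem_enum _ i); move/sat_Df; rewrite tuple_env_i /=.
      by move/isidx_inr.
    by [].
Qed.
End Main.

Lemma iso_trans (Sym : finType) (ar : Sym -> nat) (M N P : structure ar) :
  isomorphic M N -> isomorphic N P -> isomorphic M P.
Proof.
move=> [f1 [g1 [c1 [c2 h1]]]] [f2 [g2 [d1 [d2 h2]]]].
exists (f2 \o f1), (g1 \o g2); split; [|split].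
- by move=> x /=; rewrite d1 c1.
- by move=> x /=; rewrite c2 d2.
- by move=> s a; rewrite h1 h2.
Qed.

Unset Implicit Arguments.
Theorem mainTheorem5 (Sym : finType) (ar : Sym -> nat) (k : nat)
    (c : scheme ar k) :
  exists c' : scheme ar (k + 2),
    k1 c' = 0 /\ k2 c' = k2 c + 2 /\
    (forall T : ktree (k2 c), exists T' : ktree (k2 c'),
        isomorphic (interp c T) (interp c' T')) /\
    (forall M : structure ar, Kmo c M -> Kmo c' M).
Proof.
exists (c' c); split; first by []; split; first by [].
split.
  by move=> T; exists (Tp (k1 c) T); exact: iso_main.
move=> M [T hM]; exists (Tp (k1 c) T); exact: iso_trans hM (iso_main T).
Qed.
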